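(* Let $(p,q)$ be a coprime pair of positive integers with $1\le q<p$, let $(a,b)=(p-q,q)$, and let $n_L,n_R$, the integers $a_j$ ($-n_R\le j\le n_L$, $j\ne0$) and $c$ be constructed from $(a,b)$ as in the context. Then \[[\,|a_1|,\dots,|a_{n_L}|,|c|,|a_{-n_R}|,\dots,|a_{-1}|\,]=\frac{p^2}{pq-1}\quad\text{or}\quad[\,|a_{-1}|,\dots,|a_{-n_R}|,|c|,|a_{n_L}|,\dots,|a_1|\,]=\frac{p^2}{pq-1}.\] Equivalently, the linear plumbing of disk bundles over $S^2$ with Euler numbers $a_1,\dots,a_{n_L},c,a_{-n_R},\dots,a_{-1}$ (in this order along a chain) is diffeomorphic to $C_{p,q}$.
   Context: Continued fractions: $[x_1,\dots,x_n]=x_1-\cfrac{1}{x_2-\cfrac{1}{\ddots-\cfrac{1}{x_n}}}$. $C_{p,q}$ is the linear plumbing with weights $-c_0,\dots,-c_N$ where $p^2/(pq-1)=[c_0,\dots,c_N]$ with all $c_i\ge2$. Word: set $(a_0,b_0)=(a,b)$; if $a_i>b_i$ let $w_{i+1}=L$, $(a_{i+1},b_{i+1})=(a_i-b_i,b_i)$; if $a_i<b_i$ let $w_{i+1}=R$, $(a_{i+1},b_{i+1})=(a_i,b_i-a_i)$; stop at the first $N$ with $(a_N,b_N)=(1,1)$. Let $W_i=w_{N+1-i}$, and $n_L$, $n_R$ the numbers of $L$'s and $R$'s. Sequence: each $\{a^{(i)}_j\}$ is indexed by consecutive integers $m(i)\le j\le M(i)$. Start with $(a^{(0)}_{-1},a^{(0)}_0,a^{(0)}_1)=(-1,-1,-1)$.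 For $i=1,\dots,N$, always $a^{(i)}_0=-1$, and: if $W_i=R$, set $a^{(i)}_j=a^{(i-1)}_j$ for $1<j\le M(i-1)$, $a^{(i)}_1=a^{(i-1)}_1-1$, $a^{(i)}_{-1}=-2$, $a^{(i)}_j=a^{(i-1)}_{j+1}$ for $m(i-1)-1\le j<-1$; if $W_i=L$, set $a^{(i)}_j=a^{(i-1)}_j$ for $m(i-1)\le j<-1$, $a^{(i)}_{-1}=a^{(i-1)}_{-1}-1$, $a^{(i)}_1=-2$, $a^{(i)}_j=a^{(i-1)}_{j-1}$ for $1<j\le M(i-1)+1$. After $N$ steps the index range is $-(n_R+1)\le j\le n_L+1$; put $a_j=a^{(N)}_j$ for $-n_R\le j\le n_L$, $j\neq0$, and $c=a^{(N)}_{n_L+1}+a^{(N)}_{-(n_R+1)}-2$. *)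

(* Defs.v *)
From HB Require Import structures.
From mathcomp Require Import all_boot all_order all_algebra.
Local Open Scope ring_scope.
Set Implicit Arguments. Unset Strict Implicit. Unset Printing Implicit Defensive.
Import Order.TTheory GRing.Theory Num.Theory.

Inductive letter := L | R.
Definition letter_eqb (x y : letter) : bool :=
  match x, y with L, L | R, R => true | _, _ => false end.

(* Euclid-type word w_1 ... w_N of (a,b): with fuel (a+b suffices, each step
   decreases a+b). Stops at (1,1). *)
Fixpoint word_fuel (fuel a b : nat) : seq letter :=
  match fuel with
  | 0 => [::]
  | f.+1 =>
      if (a == 1)%N && (b == 1)%N then [::]
      else if (b < a)%N then L :: word_fuel f (a - b)%N b
      else if (a < b)%N then R :: word_fuel f a (b - a)%N
      else [::]
  end.

Definition word (a b : nat) : seq letter := word_fuel (a + b)%N a b.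

Definition Wword (a b : nat) : seq letter := rev (word a b).

Definition n_L (a b : nat) : nat := count (letter_eqb L) (word a b).
Definition n_R (a b : nat) : nat := count (letter_eqb R) (word a b).

(* The sequence {a^(i)_j}, m(i) <= j <= M(i), is encoded by the pair
   (P, Q) with P = [:: a_1; a_2; ...; a_M] and Q = [:: a_{-1}; a_{-2}; ...; a_m];
   a_0 = -1 always. *)
Definition seq_state := (seq int * seq int)%type.

Definition seq_init : seq_state := ([:: (-1 : int)], [:: (-1 : int)]).

Definition seq_step (s : seq_state) (W : letter) : seq_state :=
  let: (P, Q) := s in
  match W with
  | R => ((head (0 : int) P - 1) :: behead P, (-2 : int) :: Q)
  | L => ((-2 : int) :: P, (head (0 : int) Q - 1) :: behead Q)
  end.

Definition seq_final (a b : nat) : seq_state := foldl seq_step seq_init (Wword a b).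

Definition aN (a b : nat) (j : int) : int :=
  let: (P, Q) := seq_final a b in
  match j with
  | Posz 0 => (-1 : int)
  | Posz k.+1 => nth 0%R P k
  | Negz k => nth 0%R Q k   (* Negz k = -(k+1) *)
  end.

Definition a_coef (a b : nat) (j : int) : int := aN a b j.

Definition c_coef (a b : nat) : int :=
  (aN a b (Posz (n_L a b).+1) + aN a b (- Posz (n_R a b).+1) - 2)%R.

Fixpoint hjcf (s : seq rat) : rat :=
  match s with
  | [::] => 0%R
  | [:: x] => x
  | x :: s' => (x - (hjcf s')^-1)%R
  end.

Definition absQ (z : int) : rat := ((absz z)%:R)%R.

Definition chain1 (a b : nat) : seq rat :=
  [seq absQ (a_coef a b (Posz j)) | j <- iota 1 (n_L a b)]
  ++ [:: absQ (c_coef a b)]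
  ++ [seq absQ (a_coef a b (- Posz j)%R) | j <- rev (iota 1 (n_R a b))].

Definition chain2 (a b : nat) : seq rat :=
  [seq absQ (a_coef a b (- Posz j)%R) | j <- iota 1 (n_R a b)]
  ++ [:: absQ (c_coef a b)]
  ++ [seq absQ (a_coef a b (Posz j)) | j <- rev (iota 1 (n_L a b))].

(* Main.v *)
Require Import Defs.
From mathcomp Require Import all_boot all_order all_algebra.
From mathcomp Require Import ring lra zify.
Import GRing.Theory Num.Theory.
Local Open Scope ring_scope.

Record mat := Mat { m11 : rat; m12 : rat; m21 : rat; m22 : rat }.
Definition mmul (A B : mat) : mat :=
  Mat (m11 A * m11 B + m12 A * m21 B) (m11 A * m12 B + m12 A * m22 B)
      (m21 A * m11 B + m22 A * m21 B) (m21 A * m12 B + m22 A * m22 B).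
Definition I2 := Mat 1 0 0 1.
Definition Tm := Mat 1 1 0 1.
Definition Um := Mat 1 0 (-1) 1.
Definition Nm := Mat 0 1 (-1) (-2).
Definition Mx (x : rat) := Mat x (-1) 1 0.
Definition Kmat (s : seq rat) : mat := foldr (fun x m => mmul (Mx x) m) I2 s.

Ltac matsolve := repeat match goal with A : mat |- _ => destruct A end;
  rewrite /mmul /=; congr Mat; ring.

Lemma mmulA A B C : mmul A (mmul B C) = mmul (mmul A B) C.
Proof. matsolve. Qed.
Lemma mmul1m A : mmul I2 A = A.
Proof. matsolve. Qed.

Lemma Kmat_cat s t : Kmat (s ++ t) = mmul (Kmat s) (Kmat t).
Proof.
elim: s => [|x s IH] /=; first by rewrite mmul1m.
by rewrite IH mmulA.
Qed.

Lemma Kmat_rcons s x : Kmat (rcons s x) = mmul (Kmat s) (Mx x).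
Proof. rewrite -cats1 Kmat_cat /=. by matsolve. Qed.

Lemma hjcf_K s : s != [::] -> all (fun x => 2 <= x) s ->
  hjcf s = m11 (Kmat s) / m21 (Kmat s) /\ m21 (Kmat s) + 1 <= m11 (Kmat s)
  /\ 1 <= m21 (Kmat s).
Proof.
elim: s => [//|x s IH] _ /= /andP[hx hs].
case: s IH hs => [|y s] IH hs.
  have -> : (1 * 1 + 0 * 0 : rat) = 1 by ring.
  have -> : (x * 1 + -1 * 0 : rat) = x by ring.
  rewrite divr1; split => //; split; lra.
have [IH1 [IH2 IH3]] := IH isT hs.
move: IH1 IH2 IH3.
set S := y :: s.
rewrite -/S => ->.
set n := m11 (Kmat S); set d := m21 (Kmat S) => h2 h3.
have -> : (1 * n + 0 * d) = n by ring.
rewrite invf_div.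
have hn : n != 0 by apply/eqP; lra.
split; last split.
- apply: (mulIf hn). rewrite mulrBl divfK // [_ / n * n]divfK //. ring.
- nra.
- lra.
Qed.
Lemma word_fuelE f g a b : (1 <= a)%N -> (1 <= b)%N -> (a + b <= f)%N -> (a + b <= g)%N ->
  word_fuel f a b = word_fuel g a b.
Proof.
elim: f g a b => [|f IH] [|g] a b ha hb hf hg //=; try lia.
case: ifP => // _.
case: ifP => hba.
  congr cons; apply: IH; lia.
case: ifP => hab //.
congr cons; apply: IH; lia.
Qed.

Lemma wordE a b : (1 <= a)%N -> (1 <= b)%N ->
  word a b = if (a == 1)%N && (b == 1)%N then [::]
             else if (b < a)%N then L :: word (a - b) b
             else if (a < b)%N then R :: word a (b - a) else [::].
Proof.
move=> ha hb; rewrite /word.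
have -> : (a + b = (a + b).-1.+1)%N by lia.
rewrite /=. case: ifP => // _.
case: ifP => hba; first by congr cons; apply: word_fuelE; lia.
case: ifP => hab //; by congr cons; apply: word_fuelE; lia.
Qed.

Lemma seq_final_cons a b w w' : word a b = w :: w' ->
  seq_final a b = seq_step (foldl seq_step seq_init (rev w')) w.
Proof. by rewrite /seq_final /Wword => ->; rewrite rev_cons foldl_rcons. Qed.

Definition neg (z : int) : rat := - (z%:~R).
Definition tgt (a b : nat) : mat :=
  let A : rat := a%:R in let B : rat := b%:R in let P := A + B in
  Mat (P ^+ 2) (- (P * A - 1)) (P * B - 1) (- (A * B - 1)).

Lemma negB1 x : neg (x - 1) = neg x + 1.
Proof. rewrite /neg rmorphB /=. ring. Qed.

Lemma Mx1 x : Mx (x + 1) = mmul Tm (Mx x).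
Proof. rewrite /mmul /=; congr Mat; ring. Qed.
Lemma Mx1' x : Mx (x + 1) = mmul (Mx x) Um.
Proof. rewrite /mmul /=; congr Mat; ring. Qed.

Lemma K_headQ (Q : seq int) : Q != [::] ->
  Kmat (map neg ((head 0 Q - 1) :: behead Q)) = mmul Tm (Kmat (map neg Q)).
Proof. case: Q => [//|x Q] _ /=. by rewrite negB1 Mx1 mmulA. Qed.

Lemma K_consQ (Q : seq int) : Kmat (map neg (-2 :: Q)) = mmul (Mx 2) (Kmat (map neg Q)).
Proof. by rewrite /= /neg rmorphN /= opprK. Qed.

Lemma K_headP (P : seq int) : P != [::] ->
  Kmat (map neg (rev ((head 0 P - 1) :: behead P))) = mmul (Kmat (map neg (rev P))) Um.
Proof.
case: P => [//|x P] _ /=. rewrite !rev_cons !map_rcons !Kmat_rcons negB1 Mx1'.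
by rewrite mmulA.
Qed.

Lemma K_consP (P : seq int) : Kmat (map neg (rev (-2 :: P))) = mmul (Kmat (map neg (rev P))) (Mx 2).
Proof. by rewrite rev_cons map_rcons Kmat_rcons /neg rmorphN /= opprK. Qed.

Lemma shape_head (Qi : seq int) ql : all (fun z => z <= -2) Qi -> ql <= -1 ->
  exists Qi' ql', (head 0 (rcons Qi ql) - 1) :: behead (rcons Qi ql) = rcons Qi' ql' /\
   all (fun z => z <= -2) Qi' /\ ql' <= -1 /\ size Qi' = size Qi.
Proof.
case: Qi => [|x Qi] /= hQ hl.
  exists [::], (ql - 1); split => //; split => //; split => //; lia.
case/andP: hQ => hx hQ.
exists ((x-1) :: Qi), ql; split => //; split => //=.
by rewrite hQ andbT; lia.
Qed.

Lemma stepL_mat A B a b : (b <= a)%N ->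
  mmul (mmul A Nm) B = tgt (a - b) b ->
  mmul (mmul (mmul Tm A) Nm) (mmul B (Mx 2)) = tgt a b.
Proof.
move=> hba H.
have -> : mmul (mmul (mmul Tm A) Nm) (mmul B (Mx 2)) = mmul Tm (mmul (mmul (mmul A Nm) B) (Mx 2)).
  by matsolve.
rewrite H /tgt natrB //= /mmul /=; congr Mat; ring.
Qed.

Lemma stepR_mat A B a b : (a <= b)%N ->
  mmul (mmul A Nm) B = tgt a (b - a) ->
  mmul (mmul (mmul (Mx 2) A) Nm) (mmul B Um) = tgt a b.
Proof.
move=> hba H.
have -> : mmul (mmul (mmul (Mx 2) A) Nm) (mmul B Um) = mmul (Mx 2) (mmul (mmul (mmul A Nm) B) Um).
  by matsolve.
rewrite H /tgt natrB //= /mmul /=; congr Mat; ring.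
Qed.

Lemma main_inv n : forall a b, (a + b <= n)%N -> (1 <= a)%N -> (1 <= b)%N -> coprime a b ->
  exists Pi pl Qi ql, seq_final a b = (rcons Pi pl, rcons Qi ql) /\
   n_L a b = size Pi /\ n_R a b = size Qi /\
   all (fun z => z <= -2) Pi /\ all (fun z => z <= -2) Qi /\ pl <= -1 /\ ql <= -1 /\
   mmul (mmul (Kmat (map neg (rcons Qi ql))) Nm) (Kmat (map neg (rev (rcons Pi pl)))) = tgt a b.
Proof.
elim: n => [|n IH] a b hn ha hb hc; first lia.
have hw := wordE a b ha hb.
case: (boolP ((a == 1)%N && (b == 1)%N)) hw => [/andP[/eqP ea /eqP eb]|hne] hw.
  subst a b.
  exists [::], (-1), [::], (-1).
  rewrite /seq_final /Wword /n_L /n_R hw /=.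
  split => //; split => //; split => //; split => //; split => //; split => //; split => //.
case: (ltngtP b a) hw => hba hw.
-
  have hc' : coprime (a - b) b.
    by rewrite /coprime gcdnC -(gcdnDr b (a - b)) subnK ?(ltnW hba) // gcdnC.
  have [Pi [pl [Qi [ql [hs [hL [hR [hP [hQ [hpl [hql hK]]]]]]]]]]] :=
    IH (a - b)%N b ltac:(lia) ltac:(lia) hb hc'.
  have [Qi' [ql' [eQ [hQ' [hql' sQ]]]]] := shape_head Qi ql hQ hql.
  exists (-2 :: Pi), pl, Qi', ql'.
  rewrite (seq_final_cons _ _ _ _ hw) -/(Wword (a - b) b) -/(seq_final (a - b) b) hs /= eQ.
  split => //.
  split; first by rewrite /n_L hw /= -/(n_L (a-b) b) hL.
  split; first by rewrite /n_R hw /= -/(n_R (a-b) b) hR sQ.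
  split => //.
  split => //; split => //; split => //.
  rewrite -eQ K_headQ; last by case: (Qi).
  rewrite -rcons_cons K_consP. apply: stepL_mat => //; exact: ltnW.
-
  have hc' : coprime a (b - a).
    by rewrite /coprime -(gcdnDr a (b - a)) subnK ?(ltnW hba).
  have [Pi [pl [Qi [ql [hs [hL [hR [hP [hQ [hpl [hql hK]]]]]]]]]]] :=
    IH a (b - a)%N ltac:(lia) ha ltac:(lia) hc'.
  have [Pi' [pl' [eP [hP' [hpl' sP]]]]] := shape_head Pi pl hP hpl.
  exists Pi', pl', (-2 :: Qi), ql.
  rewrite (seq_final_cons _ _ _ _ hw) -/(Wword a (b - a)) -/(seq_final a (b - a)) hs /= eP.
  split => //.
  split; first by rewrite /n_L hw /= -/(n_L a (b-a)) hL sP.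
  split; first by rewrite /n_R hw /= -/(n_R a (b-a)) hR.
  split => //.
  split => //.
  split => //; split => //.
  rewrite -eP K_headP; last by case: (Pi).
  have -> : neg (-2) = 2 by rewrite /neg rmorphN /= opprK.
  apply: stepR_mat => //; exact: ltnW.
- subst b. move: hc; rewrite /coprime gcdnn => /eqP ea. by rewrite ea eqxx in hne.
Qed.

Lemma absQ_neg z : z <= 0 -> absQ z = neg z.
Proof.
move=> hz; rewrite /absQ natr_absz ler0_norm // /neg.
by rewrite rmorphN.
Qed.

Lemma neg_ge2 z : z <= -2 -> 2 <= neg z.
Proof.
move=> hz; rewrite /neg.
have : (z%:~R : rat) <= (-2 : int)%:~R by rewrite ler_int.
rewrite rmorphN /=. lra.
Qed.

Lemma chain_K X (ql pl : int) Y :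
  mmul X (mmul (Mx (neg (pl + ql - 2))) Y) =
  mmul (mmul (mmul X (Mx (neg ql))) Nm) (mmul (Mx (neg pl)) Y).
Proof.
have -> : neg (pl + ql - 2) = neg pl + neg ql + 2 by rewrite /neg !rmorphB !rmorphD /=; ring.
by matsolve.
Qed.

Lemma map_iota_shift (f : nat -> rat) n : [seq f j | j <- iota 1 n] = [seq f i.+1 | i <- iota 0 n].
Proof. by rewrite (iotaDl 1 0) -map_comp. Qed.

Lemma part_eq (S : seq int) x (g : nat -> int) :
  (forall k, g k.+1 = nth 0 (rcons S x) k) -> all (fun z => z <= -2) S ->
  [seq absQ (g j) | j <- iota 1 (size S)] = map neg S.
Proof.
move=> hg hS; rewrite map_iota_shift.
rewrite -{2}(mkseq_nth 0 S) /mkseq -map_comp.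
apply/eq_in_map => i; rewrite mem_iota add0n => /andP[_ hi] /=.
rewrite hg nth_rcons hi absQ_neg //.
have h := (allP hS) _ (mem_nth 0 hi). move: h => /= h. by apply: (Order.le_trans h).
Qed.

Lemma all_neg (S : seq int) : all (fun z => z <= -2) S -> all (fun x => 2 <= x) (map neg S).
Proof.
move=> hS; apply/allP => x /mapP[z hz ->]; apply: neg_ge2; exact: (allP hS).
Qed.

Local Close Scope ring_scope.

Theorem lemma3p1 (p q : nat) (hq : 1 <= q) (hqp : q < p) (hcop : coprime p q) :
  let a := p - q in
  let b := q in
  hjcf (chain1 a b) = ((p%:R ^+ 2) / (p%:R * q%:R - 1) : rat)%R \/
  hjcf (chain2 a b) = ((p%:R ^+ 2) / (p%:R * q%:R - 1) : rat)%R.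
Proof.
move=> a b; right.
have ha : (1 <= a)%N by rewrite /a; lia.
have hb : (1 <= b)%N by [].
have hc : coprime a b.
  by rewrite /coprime gcdnC -(gcdnDr q (p - q)) subnK ?(ltnW hqp) // gcdnC.
have [Pi [pl [Qi [ql [hs [hL [hR [hP [hQ [hpl [hql hK]]]]]]]]]]] :=
  main_inv (a + b) a b (leqnn _) ha hb hc.
have hch : chain2 a b = map neg Qi ++ [:: neg (pl + ql - 2)%R] ++ map neg (rev Pi).
  rewrite /chain2 hR hL. congr (_ ++ _ :: _).
  - apply: (part_eq _ ql) => // k. by rewrite /a_coef /aN hs.
  - rewrite /c_coef hL hR /aN hs /= !nth_rcons !ltnn !eqxx absQ_neg //.
    have /= : (pl + ql - 2 <= -4)%R by lia.
    lia.
  - rewrite map_rev (part_eq _ pl) ?map_rev // => k. by rewrite /a_coef /aN hs.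
have HK : Kmat (chain2 a b) = tgt a b.
  by rewrite hch Kmat_cat /= chain_K -hK map_rcons Kmat_rcons rev_rcons.
have hne : chain2 a b != [::] by rewrite hch; case: (map neg Qi).
have hall : all (fun x => 2 <= x)%R (chain2 a b).
  rewrite hch !all_cat !all_neg //= ?all_rev // andbT.
  rewrite andbT; apply: neg_ge2; lia.
have [-> _] := hjcf_K _ hne hall.
rewrite HK /tgt /=.
have -> : (a%:R + b%:R : rat)%R = p%:R%R by rewrite -natrD /a /b subnK // ltnW.
done.
Qed.
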